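(* Let $m\ge1$ be an integer, $h\in\mathbb{R}$, and let $y_1,y_2,\dots$ be i.i.d. real random variables under a probability measure $\mathbb{P}_\infty$, where $y_i=\mathrm{LLR}(i)=\ln\big(f_1(x_i)/f_0(x_i)\big)$ with $x_1,x_2,\dots$ i.i.d. with density $f_0$ under $\mathbb{P}_\infty$. For $n\ge m$ let $S_n=\sum_{i=n-m+1}^{n}y_i$. Let $k\ge m$ and $N>k$ be integers. Then $$\mathbb{P}_\infty\Big(\bigcap_{i=k}^{k+N-1}\{S_i<h\}\Big)\ \ge\ \big[\mathbb{P}_\infty(S_m<h)\big]^N.$$
   Context: $f_0, f_1$ are probability density functions on $\mathbb{R}$ such that the log-likelihood ratios are well-defined real random variables. *)

(* Defs.v *)
From HB Require Import structures.
From mathcomp Require Import all_boot all_order all_algebra.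
From mathcomp Require Import all_classical all_reals all_analysis.
Set Implicit Arguments. Unset Strict Implicit. Unset Printing Implicit Defensive.
Import Order.TTheory GRing.Theory Num.Theory.
Local Open Scope classical_set_scope.
Local Open Scope ring_scope.

Definition is_pdf (R : realType) (f : R -> R) : Prop :=
  [/\ measurable_fun setT f, (forall z, 0 <= f z) &
      (\int[@lebesgue_measure R]_z (f z)%:E = 1)%E].

(* The sequence x_1, x_2, ... (indices >= 1; x 0 is irrelevant) is i.i.d.
   under P: each x_i is measurable, they are mutually independent (product
   rule over every finite family of distinct positive indices and Borel sets)
   and all have the same distribution as x_1. *)
Definition iid_seq (R : realType) (d : measure_display) (T : measurableType d)
    (P : probability T R) (x : nat -> T -> R) : Prop :=
  [/\ (forall i, (0 < i)%N -> measurable_fun setT (x i)),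
      (forall (I : seq nat) (B : nat -> set R),
          uniq I -> all (fun i => 0 < i)%N I ->
          (forall i, measurable (B i)) ->
          P (\bigcap_(i in [set` I]) (x i @^-1` B i)) =
          (\prod_(i <- I) P (x i @^-1` B i))%E) &
      (forall i (B : set R), (0 < i)%N -> measurable B ->
          P (x i @^-1` B) = P (x 1%N @^-1` B))].

Definition has_density (R : realType) (d : measure_display) (T : measurableType d)
    (P : probability T R) (X : T -> R) (f : R -> R) : Prop :=
  forall B : set R, measurable B ->
    P (X @^-1` B) = (\int[@lebesgue_measure R]_(z in B) (f z)%:E)%E.

Definition LLR (R : realType) (T : Type) (f0 f1 : R -> R) (x : nat -> T -> R)
    (i : nat) : T -> R :=
  fun t => ln (f1 (x i t) / f0 (x i t)).

Definition win_sum (R : realType) (T : Type) (m : nat) (y : nat -> T -> R)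
    (n : nat) : T -> R :=
  fun t => \sum_((n.+1 - m)%N <= i < n.+1) y i t.

(* Main.v *)
Require Import Defs.
From HB Require Import structures.
From mathcomp Require Import all_boot all_order all_algebra.
From mathcomp Require Import all_classical all_reals all_analysis.
From mathcomp Require Import ring lra zify.
Import Order.TTheory GRing.Theory Num.Theory numFieldNormedType.Exports.
Local Open Scope classical_set_scope.
Local Open Scope ring_scope.

Set Implicit Arguments. Unset Strict Implicit. Unset Printing Implicit Defensive.

Fixpoint Ex (R : realFieldType) (K : nat) (p : nat -> R) (L : nat) (f : seq nat -> R) : R :=
  match L with
  | 0 => f [::]
  | L'.+1 => \sum_(v < K) p v * Ex K p L' (fun s => f (nat_of_ord v :: s))
  end.

Definition lesq (s s' : seq nat) := forall j, (nth 0 s j <= nth 0 s' j)%N.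

Definition decf (R : realFieldType) (L : nat) (f : seq nat -> R) :=
  forall s s', size s = L -> size s' = L -> lesq s s' -> f s' <= f s.

Lemma Ex_le (R : realFieldType) K (p : nat -> R) L (f g : seq nat -> R) :
  (forall v, 0 <= p v) -> (forall s, size s = L -> f s <= g s) ->
  Ex K p L f <= Ex K p L g.
Proof.
move=> p0; elim: L f g => [|L IH] f g fg /=; first exact: fg.
apply: ler_sum => v _; apply: ler_wpM2l => //; apply: IH => s sz.
by apply: fg => /=; rewrite sz.
Qed.

Lemma Ex_ext (R : realFieldType) K (p : nat -> R) L (f g : seq nat -> R) :
  (forall v, 0 <= p v) -> (forall s, size s = L -> f s = g s) ->
  Ex K p L f = Ex K p L g.
Proof.
move=> p0 fg; apply/le_anti/andP; split; apply: Ex_le => // s sz;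
  by rewrite fg.
Qed.

Lemma Ex_cst (R : realFieldType) K (p : nat -> R) L (c : R) :
  \sum_(v < K) p v = 1 -> Ex K p L (fun _ => c) = c.
Proof.
move=> p1; elim: L => [|L IH] //=.
by under eq_bigr do rewrite IH; rewrite -mulr_suml p1 mul1r.
Qed.

Lemma Ex_ge0 (R : realFieldType) K (p : nat -> R) L (f : seq nat -> R) :
  (forall v, 0 <= p v) -> (forall s, 0 <= f s) -> 0 <= Ex K p L f.
Proof.
move=> p0 f0; elim: L f f0 => [|L IH] f f0 /=; first exact: f0.
by apply: sumr_ge0 => v _; apply: mulr_ge0 => //; apply: IH.
Qed.

Lemma chebyshev_sum (R : realFieldType) K (p F G : nat -> R) :
  (forall v, 0 <= p v) -> \sum_(v < K) p v = 1 ->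
  (forall u v, (u <= v)%N -> F v <= F u) ->
  (forall u v, (u <= v)%N -> G v <= G u) ->
  (\sum_(v < K) p v * F v) * (\sum_(v < K) p v * G v) <=
  \sum_(v < K) p v * (F v * G v).
Proof.
move=> p0 p1 Fd Gd.
set A := \sum_(v < K) p v * (F v * G v).
set B := \sum_(v < K) p v * F v.
set C := \sum_(v < K) p v * G v.
have H : \sum_(u < K) \sum_(v < K) p u * p v * ((F u - F v) * (G u - G v))
   = 2 * (A - B * C).
  transitivity (\sum_(u < K) \sum_(v < K) ((p u * (F u * G u)) * p v
     + p u * (p v * (F v * G v)) - (p u * F u) * (p v * G v)
     - (p u * G u) * (p v * F v))).
    by apply: eq_bigr => u _; apply: eq_bigr => v _; ring.
  under eq_bigr do rewrite big_split /= big_split /= big_split /= !sumrN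
     -!big_distrr /=.
  rewrite big_split /= big_split /= big_split /= !sumrN.
  rewrite -!big_distrl /= p1.
  rewrite /A /B /C; ring.
have : 0 <= \sum_(u < K) \sum_(v < K) p u * p v * ((F u - F v) * (G u - G v)).
  apply: sumr_ge0 => u _; apply: sumr_ge0 => v _.
  apply: mulr_ge0; first exact: mulr_ge0.
  case: (leqP u v) => uv.
    by apply: mulr_ge0; rewrite subr_ge0; [apply: Fd | apply: Gd].
  by apply: mulr_le0; rewrite subr_le0; [apply: Fd | apply: Gd]; apply: ltnW.
rewrite H => h2; lra.
Qed.

Lemma harris (R : realFieldType) K (p : nat -> R) L (f g : seq nat -> R) :
  (forall v, 0 <= p v) -> \sum_(v < K) p v = 1 ->
  decf L f -> decf L g ->
  Ex K p L f * Ex K p L g <= Ex K p L (fun s => f s * g s).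
Proof.
move=> p0 p1; elim: L f g => [|L IH] f g fd gd /=; first by [].
have Fd : forall (h : seq nat -> R), decf L.+1 h -> forall u v, (u <= v)%N ->
    Ex K p L (fun s => h (v :: s)) <= Ex K p L (fun s => h (u :: s)).
  move=> h hd u v uv; apply: Ex_le => // s sz; apply: hd => //=; try by rewrite sz.
  by case.
have hd : forall (h : seq nat -> R) (v : nat), decf L.+1 h -> decf L (fun s => h (v :: s)).
  move=> h v hdd s s' sz sz' ss'; apply: hdd => //=; try by rewrite ?sz ?sz'.
  by case.
apply: le_trans (chebyshev_sum (F := fun v => Ex K p L (fun s => f (v :: s)))
                 (G := fun v => Ex K p L (fun s => g (v :: s))) p0 p1 _ _) _.
- exact: Fd.
- exact: Fd.
apply: ler_sum => v _; apply: ler_wpM2l => //.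
exact: (IH (fun s => f (nat_of_ord v :: s)) (fun s => g (nat_of_ord v :: s))
  (hd _ _ fd) (hd _ _ gd)).
Qed.

Definition indf (C : seq nat -> bool) (R : realFieldType) : seq nat -> R :=
  fun s => (C s)%:R.

Lemma harris_all (R : realFieldType) K (p : nat -> R) L (C : nat -> seq nat -> bool)
    (I : seq nat) :
  (forall v, 0 <= p v) -> \sum_(v < K) p v = 1 ->
  (forall i s s', size s = L -> size s' = L -> lesq s s' -> C i s' -> C i s) ->
  \prod_(i <- I) Ex K p L (fun s => (C i s)%:R) <=
  Ex K p L (fun s => (all (fun i => C i s) I)%:R).
Proof.
move=> p0 p1 Cd; elim: I => [|i I IH].
  by rewrite big_nil /= Ex_cst.
rewrite big_cons.
apply: le_trans (_ : Ex K p L (fun s => (C i s)%:R) *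
   Ex K p L (fun s => (all (fun i => C i s) I)%:R) <= _).
  apply: ler_wpM2l => //; apply: Ex_ge0 => // s; exact: ler0n.
apply: le_trans (harris p0 p1 _ _) _.
- move=> s s' sz sz' ss'; rewrite ler_nat.
  by case E: (C i s') => //; rewrite (Cd i s s' sz sz' ss' E).
- move=> s s' sz sz' ss'; rewrite ler_nat.
  case E: (all _ I) => //; have -> // : all (fun i => C i s) I.
  by apply/allP => j jI; apply: (Cd j s s' sz sz' ss'); move/allP: E; apply.
apply: Ex_le => // s _ /=.
by case: (C i s); case: (all _ I); rewrite /= ?mul1r ?mul0r.
Qed.

Definition codes (R : realType) (T : Type) (kap : R -> nat) (x : nat -> T -> R)
  (a L : nat) (t : T) : seq nat := map (fun j => kap (x j t)) (iota a L).

Definition Ev (R : realType) (T : Type) (kap : R -> nat) (x : nat -> T -> R)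
  (a L : nat) (f : seq nat -> bool) : set T := [set t | f (codes kap x a L t)].

Lemma Ev_step (R : realType) (T : Type) (kap : R -> nat) (x : nat -> T -> R)
  (K a L : nat) (f : seq nat -> bool) :
  (forall z, (kap z < K)%N) ->
  Ev kap x a L.+1 f = \big[setU/set0]_(v < K)
     (x a @^-1` (kap @^-1` [set nat_of_ord v]) `&` Ev kap x a.+1 L (fun s => f (nat_of_ord v :: s))).
Proof.
move=> kK; rewrite -(bigcup_mkord K (fun v => x a @^-1` (kap @^-1` [set v]) `&` Ev kap x a.+1 L (fun s => f (v :: s)))); apply/seteqP; split => t /=.
  by move=> Ht; exists (kap (x a t)) => //=.
by move=> [v _ [/= <-]].
Qed.

Lemma Ev_meas (R : realType) d (T : measurableType d) (kap : R -> nat)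
  (x : nat -> T -> R) (K : nat) :
  (forall z, (kap z < K)%N) ->
  (forall i, (0 < i)%N -> measurable_fun setT (x i)) ->
  (forall v, measurable (kap @^-1` [set v])) ->
  forall L a f, (0 < a)%N -> measurable (Ev kap x a L f).
Proof.
move=> kK mx mk; elim => [|L IH] a f a0.
  rewrite /Ev /codes /=; case: (f [::]).
    by rewrite [X in measurable X](_ : _ = setT) //; apply/seteqP; split.
  by rewrite [X in measurable X](_ : _ = set0) //; apply/seteqP; split.
rewrite (Ev_step _ _ _ _ kK); apply: bigsetU_measurable => v _.
apply: measurableI; last exact: IH.
by rewrite -[X in measurable X]setTI; apply: mx.
Qed.

Definition Qs (R : realType) (T : Type) (x : nat -> T -> R) (J : seq nat)
  (D : nat -> set R) : set T := \bigcap_(j in [set` J]) (x j @^-1` D j).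

Lemma P_Ex (R : realType) d (T : measurableType d) (P : probability T R)
  (kap : R -> nat) (x : nat -> T -> R) (K : nat) :
  (forall z, (kap z < K)%N) -> iid_seq P x ->
  (forall v, measurable (kap @^-1` [set v])) ->
  forall L a f J D, (0 < a)%N -> uniq J -> all (fun j => (0 < j < a)%N) J ->
  (forall j, measurable (D j)) ->
  P (Qs x J D `&` Ev kap x a L f) =
  (P (Qs x J D) * (Ex K (fun v => fine (P (x 1%N @^-1` (kap @^-1` [set v]))))
       L (fun s => (f s)%:R))%:E)%E.
Proof.
move=> kK [mx indep idd] mk; elim => [|L IH] a f J D a0 uJ aJ mD.
  rewrite /Ev /codes /=; case: (f [::]).
    rewrite [X in P X](_ : _ = Qs x J D); first by rewrite mule1.
    by apply/seteqP; split => t //= [].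
  rewrite [X in P X](_ : _ = set0); first by rewrite measure0 mule0.
  by apply/seteqP; split => t //= [].
set p := fun v => _.
pose D' (v : nat) j := if j == a then kap @^-1` [set v] else D j.
pose F v := Qs x (a :: J) (D' v) `&` Ev kap x a.+1 L (fun s => f (v :: s)).
have aJn : a \notin J.
  apply/negP => aJ'; move/allP: aJ => /(_ a aJ') /andP[_]; by rewrite ltnn.
have QE v : Qs x (a :: J) (D' v) = x a @^-1` (kap @^-1` [set v]) `&` Qs x J D.
  apply/seteqP; split => t /=.
    move=> H; split.
      by have := H a; rewrite /D' eqxx; apply; rewrite /= inE eqxx.
    move=> j /= jJ; have := H j; rewrite /D'.
    have -> : (j == a) = false by apply/eqP => ja; rewrite -ja jJ in aJn.
    by apply; rewrite /= inE jJ orbT.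
  move=> [Ha Hq] j /=; rewrite inE => /orP[/eqP ->|jJ].
    by rewrite /D' eqxx.
  rewrite /D'; have -> : (j == a) = false by apply/eqP => ja; rewrite -ja jJ in aJn.
  exact: Hq.
have mQ : forall J' D', all (fun j => (0 < j)%N) J' ->
    (forall j, measurable (D' j)) -> measurable (Qs x J' D').
  move=> J' D'' pJ mD''; apply: bigcap_measurableType => j /= jJ.
  have jpos : (0 < j)%N by move/allP: pJ; apply.
  by rewrite -[X in measurable X]setTI; apply: mx.
have pJ : all (fun j => (0 < j)%N) J.
  by apply/allP => j jJ; move/allP: aJ => /(_ j jJ) /andP[].
have pJ' : all (fun j => (0 < j)%N) (a :: J) by rewrite /= a0.
have mD' v j : measurable (D' v j) by rewrite /D'; case: (j == a).
have E1 : Qs x J D `&` Ev kap x a L.+1 f = \big[setU/set0]_(v < K) F v.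
  rewrite -(bigcup_mkord K F); apply/seteqP; split => t /=.
    move=> [Hq Hf]; exists (kap (x a t)) => //=; split => //.
    by rewrite QE; split.
  move=> [v _ []]; rewrite QE => -[/= Hv Hq] Hf; split => //.
  by rewrite /Ev /codes /= Hv.
have mF v : measurable (F v).
  apply: measurableI; first exact: mQ.
  by apply: (Ev_meas kK mx mk).
have tF : trivIset setT F.
  move=> i j _ _ [t [Fi Fj]].
  move: Fi Fj; rewrite /F !QE => -[[/= <- _] _] [[/= -> _] _] //.
rewrite E1 (measure_bigsetU P mF tF K).
have fQ : P (Qs x J D) \is a fin_num by apply: fin_num_measure; exact: mQ.
have PQ' v : P (Qs x (a :: J) (D' v)) = ((p v)%:E * P (Qs x J D))%E.
  rewrite /Qs (indep (a :: J) (D' v)) //=; last by rewrite aJn.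
  rewrite big_cons (indep J D) //; congr (_ * _)%E.
    rewrite /D' eqxx idd // /p fineK //; apply: fin_num_measure.
    by rewrite -[X in measurable X]setTI; apply: mx.
  apply: eq_big_seq => j jJ; rewrite /D'.
  by have -> : (j == a) = false by apply/eqP => ja; rewrite -ja jJ in aJn.
under eq_bigr => v _.

  rewrite /F /= (IH a.+1 _ (a :: J) (D' v)) //; last first.
  - apply/allP => j; rewrite inE => /orP[/eqP ->|jJ]; first by rewrite a0 /=.
    by move/allP: aJ => /(_ j jJ) /andP[-> /ltnW]; rewrite ltnS.
  - by rewrite /= aJn.
  rewrite PQ'.
  over.
rewrite -(fineK fQ) /=.
under eq_bigr do rewrite -!EFinM.
rewrite sumEFin -EFinM; congr EFin.
rewrite mulr_sumr; apply: eq_bigr => v _; ring.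
Qed.

Definition Kn (n : nat) : nat := (2 * n * 2 ^ n).+1.
Definition cd (R : realType) (n : nat) (y : R) : nat :=
  if y <= n%:R then Num.truncn ((y + n%:R) * (2 ^ n)%:R) else Kn n.
Definition vl {R : realType} (n : nat) (c : nat) : R :=
  - n%:R + c.+1%:R / (2 ^ n)%:R.

Lemma e_gt0 (R : realType) n : 0 < (2 ^ n)%:R :> R.
Proof. by rewrite ltr0n expn_gt0. Qed.

Lemma cd_le (R : realType) n (y : R) : (cd n y <= Kn n)%N.
Proof.
rewrite /cd; case: ifP => // yn; rewrite /Kn leqW // Num.Theory.truncn_le_nat.
have e0 := e_gt0 R n.
rewrite -natr1 !natrM; nra.
Qed.

Lemma cd_lt (R : realType) n (y : R) : (cd n y < Kn n)%N = (y <= n%:R).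
Proof.
rewrite /cd; case: ifP => yn; last by rewrite ltnn.
rewrite /Kn ltnS Num.Theory.truncn_le_nat.
have e0 := e_gt0 R n.
rewrite -natr1 !natrM; nra.
Qed.

Lemma val_le (R : realType) n c c' : (c <= c')%N -> vl n c <= vl n c' :> R.
Proof.
move=> cc; rewrite /vl lerD2l ler_pM2r ?invr_gt0 ?e_gt0 // ler_nat ltnS //.
Qed.

Lemma val_gt (R : realType) n (y : R) : y <= n%:R -> y < vl n (cd n y).
Proof.
move=> yn; rewrite /cd yn /vl.
have e0 := e_gt0 R n.
have := Num.Theory.truncnS_gt ((y + n%:R) * (2 ^ n)%:R).
set t := (Num.truncn _).+1%:R => ht.
rewrite -(ltr_pM2r e0) mulrDl mulNr divfK ?gt_eqF //; nra.
Qed.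

Lemma val_close (R : realType) n (y : R) : - n%:R <= y -> y <= n%:R ->
  vl n (cd n y) <= y + (2 ^ n)%:R^-1.
Proof.
move=> ny yn; rewrite /cd yn /vl.
have e0 := e_gt0 R n.
have h0 : 0 <= (y + n%:R) * (2 ^ n)%:R by apply: mulr_ge0; [lra | exact: ltW].
have /andP[h1 _] := Num.Theory.truncn_itv h0.
set t := Num.truncn _ in h1 *.
rewrite -(ler_pM2r e0) !mulrDl mulNr divfK ?gt_eqF // mulVf ?gt_eqF //.
rewrite -natr1; nra.
Qed.

Lemma val_mono (R : realType) n (y : R) : y <= n%:R ->
  vl n.+1 (cd n.+1 y) <= vl n (cd n y) :> R.
Proof.
move=> yn.
have yn1 : y <= n.+1%:R by rewrite -natr1; lra.
rewrite /cd yn yn1 /vl.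
have e0 := e_gt0 R n.
set E := (2 ^ n)%:R : R.
set t := Num.truncn ((y + n%:R) * E).
set t' := Num.truncn _.
have ht := Num.Theory.truncnS_gt ((y + n%:R) * E); rewrite -/t in ht.
have tt : (t' <= 2 * 2 ^ n + 2 * t + 1)%N.
  rewrite /t' Num.Theory.truncn_le_nat expnS (natrM R 2 (2 ^ n)) -/E.
  have -> : (2 * 2 ^ n + 2 * t + 1).+1%:R = 2 * E + 2 * t%:R + 2 :> R.
    by rewrite -natr1 !(natrD R) -/E; ring.
  rewrite -natr1; rewrite -natr1 in ht; nra.
have h : t'.+1%:R <= 2 * E + 2 * t%:R + 2 :> R.
  have -> : 2 * E + 2 * t%:R + 2 = (2 * 2 ^ n + 2 * t + 2)%N%:R :> R.
    by rewrite !(natrD R) -/E; ring.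
  by rewrite ler_nat; lia.
rewrite expnS (natrM R 2 (2 ^ n)) -/E.
have -> : - n.+1%:R + t'.+1%:R / (2%:R * E) =
   - n%:R - 1 + t'.+1%:R / (2%:R * E) by rewrite -natr1; ring.
have : t'.+1%:R / (2%:R * E) <= (2%:R * E + 2%:R * t%:R + 2%:R) / (2%:R * E).
  by rewrite ler_pM2r // invr_gt0 mulr_gt0.
have -> : (2%:R * E + 2%:R * t%:R + 2%:R) / (2%:R * E) = 1 + t.+1%:R / E.
  by rewrite -natr1; field; rewrite gt_eqF.
lra.
Qed.

Lemma inv_sg (R : realType) (x : R) : x^-1 = Num.sg x * expR (- ln `|x|).
Proof.
have [->|x0] := eqVneq x 0; first by rewrite invr0 sgr0 mul0r.
rewrite expRN lnK ?posrE ?normr_gt0 //.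
have [xn|xp|x00] := ltgtP x 0.
- by rewrite ltr0_sg // ltr0_norm // invrN mulN1r opprK.
- by rewrite gtr0_sg // gtr0_norm // mul1r.
- by move: x0; rewrite x00 eqxx.
Qed.

Lemma measurable_inv (R : realType) : measurable_fun [set: R] (@GRing.inv R).
Proof.
rewrite (_ : GRing.inv = (fun x : R => Num.sg x * expR (- ln `|x|))); last first.
  by apply/funext => x; rewrite inv_sg.
apply: measurable_realfun.measurable_funM.
  apply: measurable_realfun.nondecreasing_measurable => // x y xy.
  by case: (sgrP x); case: (sgrP y) => // *; lra.
apply: measurableT_comp => //; apply: measurableT_comp => //.
by apply: measurableT_comp => //.
Qed.

Definition Wd {R : realType} (m : nat) (h : R) (n r : nat) (s : seq nat) : bool :=
  [forall j : 'I_m, (nth 0 s (r + j) < Kn n)%N] &&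
  (\sum_(j < m) vl n (nth 0 s (r + j)) < h).

Lemma Wd_dec (R : realType) m (h : R) n r s s' :
  lesq s s' -> Wd m h n r s' -> Wd m h n r s.
Proof.
move=> ss /andP[/forallP H1 H2]; apply/andP; split.
  by apply/forallP => j; exact: leq_ltn_trans (ss _) (H1 j).
apply: le_lt_trans H2; apply: ler_sum => j _; apply: val_le; exact: ss.
Qed.

Lemma Wd_shift (R : realType) m (h : R) n r s s' :
  (forall j, (j < m)%N -> nth 0 s (r + j) = nth 0 s' j) ->
  Wd m h n r s = Wd m h n 0 s'.
Proof.
move=> E; rewrite /Wd; congr andb.
  by apply: eq_forallb => j; rewrite add0n E.
by congr (_ < h); apply: eq_bigr => j _; rewrite add0n E.
Qed.

Lemma nth_codes (R : realType) (T : Type) (kap : R -> nat) (x : nat -> T -> R)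
  a L t j : (j < L)%N -> nth 0 (codes kap x a L t) j = kap (x (a + j) t).
Proof. by move=> jL; rewrite /codes (nth_map 0) ?size_iota // nth_iota. Qed.

Lemma W_sub (R : realType) m (h : R) n s (ys : nat -> R) :
  (forall j, (j < m)%N -> nth 0 s j = cd n (ys j)) ->
  Wd m h n 0 s -> \sum_(j < m) ys j < h.
Proof.
move=> E /andP[/forallP H1 H2]; apply: le_lt_trans H2.
apply: ler_sum => j _; rewrite add0n E //; apply: ltW; apply: val_gt.
by rewrite -cd_lt -E // -(add0n j) H1.
Qed.

Lemma W_mono (R : realType) m (h : R) n s s' (ys : nat -> R) :
  (forall j, (j < m)%N -> nth 0 s j = cd n (ys j)) ->
  (forall j, (j < m)%N -> nth 0 s' j = cd n.+1 (ys j)) ->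
  Wd m h n 0 s -> Wd m h n.+1 0 s'.
Proof.
move=> E E' /andP[/forallP H1 H2].
have yn : forall j : 'I_m, ys j <= n%:R.
  by move=> j; rewrite -cd_lt -E // -(add0n j) H1.
apply/andP; split.
  apply/forallP => j; rewrite add0n E' // cd_lt.
  by have := yn j; rewrite -natr1; lra.
apply: le_lt_trans H2; apply: ler_sum => j _; rewrite !add0n E // E' //.
exact: val_mono.
Qed.

Lemma W_cover (R : realType) m (h : R) (ys : nat -> R) :
  (0 < m)%N -> \sum_(j < m) ys j < h ->
  exists n, forall s, (forall j, (j < m)%N -> nth 0 s j = cd n (ys j)) ->
    Wd m h n 0 s.
Proof.
move=> m0 Sh.
set S := \sum_(j < m) ys j.
have mR : 0 < m%:R :> R by rewrite ltr0n.
set dl := (h - S) / m%:R.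
have dl0 : 0 < dl by rewrite /dl divr_gt0 // subr_gt0.
set M := \sum_(j < m) `|ys j| + dl^-1.
have [n Mn] : exists n : nat, M < n%:R.
  by exists (Num.truncn M).+1; exact: Num.Theory.truncnS_gt.
exists n => s E.
have yM : forall j : 'I_m, `|ys j| <= M.
  move=> j; rewrite /M (bigD1 j) //=.
  have : 0 <= \sum_(i < m | i != j) `|ys i| by apply: sumr_ge0.
  have : 0 <= dl^-1 by rewrite invr_ge0 ltW.
  lra.
have En : n%:R < (2 ^ n)%:R :> R by rewrite ltr_nat ltn_expl.
have e0 := e_gt0 R n.
have Edl : (2 ^ n)%:R^-1 < dl.
  have h1 : dl^-1 < (2 ^ n)%:R :> R.
    have : dl^-1 <= M.
      rewrite /M; have : 0 <= \sum_(j < m) `|ys j| by apply: sumr_ge0.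
      lra.
    lra.
  rewrite -(ltr_pM2r e0) mulVf ?gt_eqF //.
  have : dl * dl^-1 = 1 by rewrite mulfV ?gt_eqF.
  nra.
apply/andP; split.
  apply/forallP => j; rewrite add0n E // cd_lt.
  have := yM j; have := ler_norm (ys j); lra.
apply: (@le_lt_trans _ _ (\sum_(j < m) (ys j + (2 ^ n)%:R^-1))).
  apply: ler_sum => j _; rewrite add0n E //; apply: val_close.
    have := yM j; have := ler_norm (- ys j); rewrite normrN; lra.
  have := yM j; have := ler_norm (ys j); lra.
rewrite big_split /= -/S sumr_const card_ord -mulr_natl.
have : m%:R * dl = h - S by rewrite /dl mulrC divfK ?gt_eqF.
nra.
Qed.

Unset Implicit Arguments.

Lemma lim_pow (R : realType) (u : nat -> R) (a b : R) (N : nat) :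
  u @ \oo --> a -> (forall n, u n ^+ N <= b) -> a ^+ N <= b.
Proof.
move=> ua ub.
have h : (fun n => u n ^+ N) @ \oo --> a ^+ N.
  exact: (continuous_cvg _ (@exprn_continuous R N a) ua).
apply: (ler_cvg_to h (cvg_cst b)).
by apply: nearW => n; apply: ub.
Qed.

Lemma cd_mono (R : realType) n (y y' : R) : y <= y' -> (cd n y <= cd n y')%N.
Proof.
move=> yy; rewrite /cd; case: ifP => yn; case: ifP => y'n //.
- apply: Num.Theory.le_truncn; apply: ler_wpM2r; first by apply: ltW; apply: e_gt0.
  by rewrite lerD2r.
- by have := cd_le n y; rewrite /cd yn.
- by move: yn; rewrite (le_trans yy y'n).
Qed.

Lemma win_sumE (R : realType) (T : Type) m (y : nat -> T -> R) i t :
  (m <= i.+1)%N ->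
  win_sum m y i t = \sum_(j < m) y (i.+1 - m + j)%N t.
Proof.
move=> mi; rewrite /win_sum; set a := (i.+1 - m)%N.
have -> : i.+1 = (a + m)%N by rewrite /a subnK.
rewrite -{1}[a]add0n big_addn addKn big_mkord.
by apply: eq_bigr => j _; rewrite addnC.
Qed.

Theorem lemma1 (R : realType) (d : measure_display) (T : measurableType d)
    (P : probability T R) (f0 f1 : R -> R) (x : nat -> T -> R)
    (m : nat) (h : R) (k N : nat) :
  is_pdf f0 -> is_pdf f1 ->
  iid_seq P x -> has_density P (x 1%N) f0 ->
  (1 <= m)%N -> (m <= k)%N -> (k < N)%N ->
  let S := win_sum m (LLR f0 f1 x) in
  (((fine (P [set t | (S m t < h)%R])) ^+ N)%:E <=
    P (\bigcap_(i in [set i | (k <= i < k + N)%N]) [set t | (S i t < h)%R]))%E.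
Proof.
move=> [mf0 _ _] [mf1 _ _] iid _ m1 mk kN; cbv zeta.
set S := win_sum m (LLR f0 f1 x).
have iid' := iid; case: iid' => mx indep idd.
pose g := fun z : R => ln (f1 z / f0 z).
have mg : measurable_fun setT g.
  apply: measurableT_comp => //.
  apply: measurable_realfun.measurable_funM => //.
  exact: measurableT_comp (@measurable_inv R) mf0.
pose kap n := fun z => cd n (g z).
have kK n z : (kap n z < (Kn n).+1)%N by rewrite ltnS cd_le.
have mkap n v : measurable (kap n @^-1` [set v]).
  have mf : measurable_fun setT (fun z => (cd n (g z))%:R : R).
    have mc : measurable_fun setT (fun y : R => (cd n y)%:R : R).
      apply: measurable_realfun.nondecreasing_measurable => // y y' yy.
      by rewrite ler_nat cd_mono.
    exact: (measurableT_comp mc mg).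
  rewrite (_ : kap n @^-1` [set v] = (fun z => (cd n (g z))%:R : R) @^-1` [set v%:R]).
    by rewrite -[X in measurable X]setTI; apply: mf => //; exact: measurable_set1.
  apply/seteqP; split => z /=; first by move=> <-.
  by move/eqP; rewrite eqr_nat => /eqP.
pose p n v := fine (P (x 1%N @^-1` (kap n @^-1` [set v]))).
have p0 n v : 0 <= p n v by apply: fine_ge0; exact: measure_ge0.
have PEx n L a f : (0 < a)%N ->
    P (Ev (kap n) x a L f) = (Ex (Kn n).+1 (p n) L (fun s => (f s)%:R))%:E.
  move=> a0.
  have := @P_Ex R d T P (kap n) x (Kn n).+1 (kK n) iid (mkap n) L a f [::]
     (fun _ => setT) a0 erefl erefl (fun _ => measurableT).
  rewrite /Qs set_nil bigcap_set0 setTI probability_setT mul1e.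
  by [].
have p1 n : \sum_(v < (Kn n).+1) p n v = 1.
  have := PEx n 1%N 1%N (fun _ => true) erefl.
  rewrite (_ : Ev _ _ _ _ _ = setT); last by apply/seteqP; split.
  rewrite probability_setT /= => /eqP; rewrite eqe => /eqP ->.
  by apply: eq_bigr => v _; rewrite mulr1.
pose RE n a := Ev (kap n) x a m (Wd m h n 0).
have Si i t : (m <= i)%N -> S i t = \sum_(j < m) g (x (i.+1 - m + j)%N t).
  by move=> mi; rewrite /S win_sumE //; apply: leqW.
have codesE n a t j : (j < m)%N ->
    nth 0 (codes (kap n) x a m t) j = cd n (g (x (a + j)%N t)).
  by move=> jm; rewrite nth_codes.
have REsub n i t : (m <= i)%N -> RE n (i.+1 - m)%N t -> S i t < h.
  move=> mi Ht; rewrite Si //.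
  exact: (W_sub (ys := fun j => g (x (i.+1 - m + j)%N t)) (codesE n _ t) Ht).
have REmono n a : RE n a `<=` RE n.+1 a.
  move=> t Ht.
  exact: (W_mono (ys := fun j => g (x (a + j)%N t)) (codesE n a t) (codesE n.+1 a t) Ht).
have REcover i t : (m <= i)%N -> S i t < h -> exists n, RE n (i.+1 - m)%N t.
  move=> mi; rewrite Si // => Ht.
  have [n Hn] := W_cover (ys := fun j => g (x (i.+1 - m + j)%N t)) m1 Ht.
  by exists n; apply: Hn; exact: codesE.
have Aeq i : (m <= i)%N -> [set t | S i t < h] = \bigcup_n RE n (i.+1 - m)%N.
  move=> mi; apply/seteqP; split => t /=.
    by move=> Ht; have [n Hn] := REcover i t mi Ht; exists n.
  by move=> [n _ Hn]; exact: REsub Hn.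
have mRE n a : (0 < a)%N -> measurable (RE n a).
  by move=> a0; exact: (Ev_meas (kK n) mx (mkap n) m (Wd m h n 0) a0).
have a_pos i : (m <= i)%N -> (0 < i.+1 - m)%N by move=> mi; rewrite subn_gt0 ltnS.
have mA i : (m <= i)%N -> measurable [set t | S i t < h].
  move=> mi; rewrite Aeq //; apply: bigcupT_measurable => n; apply: mRE.
  exact: a_pos.
have mI : measurable (\bigcap_(i in [set i | (k <= i < k + N)%N])
                         [set t | S i t < h]).
  apply: bigcap_measurableType => i /= /andP[ki _]; apply: mA.
  exact: leq_trans mk ki.
have bound n : (((fine (P (RE n 1%N))) ^+ N)%:E <=
    P (\bigcap_(i in [set i | (k <= i < k + N)%N]) [set t | (S i t < h)%R]))%E.
  set a0 := (k.+1 - m)%N.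
  set L := (N + m).-1.
  have shiftE i : (k <= i < k + N)%N ->
      Ev (kap n) x a0 L (Wd m h n (i - k)) = RE n (i.+1 - m)%N.
    move=> /andP[ki ikN].
    have E t : Wd m h n (i - k) (codes (kap n) x a0 L t) =
               Wd m h n 0 (codes (kap n) x (i.+1 - m) m t).
      apply: Wd_shift => j jm.
      rewrite nth_codes; last by rewrite /L; lia.
      rewrite nth_codes //.
      by congr (kap n (x _ t)); rewrite /a0; lia.
    by apply/seteqP; split => t; rewrite /RE /Ev /= E.
  pose Eall := Ev (kap n) x a0 L (fun s => all (fun i => Wd m h n (i - k) s) (iota k N)).
  have sub : Eall `<=` \bigcap_(i in [set i | (k <= i < k + N)%N]) [set t | S i t < h].
    move=> t Ht i /= Ii.
    have : Ev (kap n) x a0 L (Wd m h n (i - k)) t.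
      by move/allP: Ht; apply; rewrite mem_iota.
    rewrite shiftE // => H; apply: (REsub n i t) => //.
    by case/andP: Ii => ki _; exact: leq_trans mk ki.
  have a00 : (0 < a0)%N by rewrite /a0 subn_gt0 ltnS.
  have q_eq i : (k <= i < k + N)%N ->
      Ex (Kn n).+1 (p n) L (fun s => (Wd m h n (i - k) s)%:R) =
      Ex (Kn n).+1 (p n) m (fun s => (Wd m h n 0 s)%:R).
    move=> Ii; apply/eqP; rewrite -eqe -(PEx n L a0 _ a00) shiftE // PEx //.
    by apply: a_pos; case/andP: Ii => ki _; exact: leq_trans mk ki.
  have RE1 : P (RE n 1%N) = (Ex (Kn n).+1 (p n) m (fun s => (Wd m h n 0 s)%:R))%:E.
    exact: PEx.
  rewrite RE1 /=.
  have Hle := le_measure P (mem_set (Ev_meas (kK n) mx (mkap n) L _ a00))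
     (mem_set mI) sub.
  have HE := PEx n L a0 (fun s => all (fun i => Wd m h n (i - k) s) (iota k N)) a00.
  apply: (@le_trans _ _ (P Eall)); last exact: Hle.
  rewrite /Eall HE lee_fin.
  apply: le_trans (harris_all (L := L) (C := fun i s => Wd m h n (i - k) s)
     (iota k N) (p0 n) (p1 n) _); last first.
    by move=> i s s' _ _ ss; exact: Wd_dec.
  rewrite (eq_big_seq (fun _ => Ex (Kn n).+1 (p n) m (fun s => (Wd m h n 0 s)%:R))).
    by rewrite big_const_seq count_predT size_iota iter_mulr mulr1.
  by move=> i; rewrite mem_iota => Ii; rewrite q_eq.
have cvgP : (fun n => P (RE n 1%N)) @ \oo --> P [set t | S m t < h].
  rewrite (Aeq m (leqnn m)) subSnn.
  apply: nondecreasing_cvg_mu => //.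
  - by move=> n; exact: mRE.
  - by apply: bigcupT_measurable => n; exact: mRE.
  - by apply/nondecreasing_seqP => n; rewrite subsetEset; exact: REmono.
have fA : P [set t | S m t < h] \is a fin_num by apply: fin_num_measure; exact: mA.
have fI : P (\bigcap_(i in [set i | (k <= i < k + N)%N]) [set t | S i t < h])
    \is a fin_num by apply: fin_num_measure.
rewrite -(fineK fI) lee_fin.
apply: (@lim_pow R (fine \o (fun n => P (RE n 1%N)))).
  by apply: fine_cvg; rewrite fineK.
by move=> n; rewrite -lee_fin fineK //; exact: bound n.
Qed.
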